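(* Let $k$ be a field and let $d,m$ be integers with $d$ even, $d\ge 4$ and $d<m-1$. Set $a=(d+2)/2$, $R=k[x_1,\dots,x_m,z]$, $I=(I_{a,1,m-1},I_{a,2,m})$ and $J=(I_{a-1,2,m-1},\, z\,I_{a-2,3,m-2})$, ideals of $R$ with $I\subset J$. (a) For all $v\in I_{a-1,2,m-1}$ and $w\in I_{a-2,3,m-2}$ we have $x_1x_m v w=0$ in $R/I$. (b) Let $b\in J$ be an element whose image in $R/I$ is $R/I$-regular, and write its image as $b=b_1+z b_2$ with $b_1$ in the ideal of $R/I$ generated by $I_{a-1,2,m-1}$ and $b_2$ in the ideal of $R/I$ generated by $I_{a-2,3,m-2}$. Let $s_0=b_2x_1x_m/b\in K(R/I)$, where $K(R/I)$ is the total quotient ring of $R/I$. Then $s_0 z w = w x_1x_m$ in $K(R/I)$ for all $w\in I_{a-2,3,m-2}$.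
   Context: For positive integers $a,p,q$ with $p<q$ and $2a\le q-p+2$, $I_{a,p,q}$ denotes the ideal (of any polynomial ring containing $x_p,\dots,x_q$) generated by all monomials $x_{t_1}\cdots x_{t_a}$ with $p\le t_1$, $t_a\le q$ and $t_j+2\le t_{j+1}$ for $1\le j\le a-1$. The total quotient ring of a ring is its localization at the multiplicative set of non-zero-divisors. *)

(* Defs.v *)
From HB Require Import structures.
From mathcomp Require Import all_boot all_algebra.
From mathcomp Require Import mpoly.
Set Implicit Arguments. Unset Strict Implicit. Unset Printing Implicit Defensive.
Import GRing.Theory.
Local Open Scope ring_scope.

(* R = k[x_1,...,x_m,z] is modelled as {mpoly k[m.+1]}:
   variable index 0 is z, variable index i (1 <= i <= m) is x_i. *)

Definition xv (k : fieldType) (m : nat) (i : nat) : {mpoly k[m.+1]} :=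
  'X_(inord i).
Definition zv (k : fieldType) (m : nat) : {mpoly k[m.+1]} := 'X_(inord 0).

Definition Igens (k : fieldType) (m a p q : nat) : {mpoly k[m.+1]} -> Prop :=
  fun g => exists t : seq nat,
    [/\ size t = a, sorted (fun i j => i.+2 <= j)%N t,
        all (fun i => p <= i <= q)%N t & g = \prod_(i <- t) xv k m i].

Definition ideal_gen (R : comRingType) (G : R -> Prop) : R -> Prop :=
  fun f => exists s : seq (R * R),
    (forall pr, pr \in s -> G pr.2) /\ f = \sum_(pr <- s) pr.1 * pr.2.

Definition genU (R : comRingType) (G1 G2 : R -> Prop) : R -> Prop :=
  fun g => G1 g \/ G2 g.
Definition genM (R : comRingType) (c : R) (G : R -> Prop) : R -> Prop :=
  fun g => exists h, G h /\ g = c * h.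

(* Working in R/I via representatives in R, with I given as a predicate:
   r is a non-zero-divisor of R/I. *)
Definition regular_mod (R : comRingType) (I : R -> Prop) (r : R) : Prop :=
  forall y, I (r * y) -> I y.

(* Equality of fractions a/s = c/t in the total quotient ring K(R/I)
   (s, t regular mod I): there is a non-zero-divisor u of R/I with
   u (a t - c s) = 0 in R/I. *)
Definition frac_eq (R : comRingType) (I : R -> Prop) (a s c t : R) : Prop :=
  exists u, regular_mod I u /\ I (u * (a * t - c * s)).

(* Main.v *)
Require Import Defs.
From HB Require Import structures.
From mathcomp Require Import all_boot all_algebra.
From mathcomp Require Import mpoly.
From mathcomp Require Import zify ring.
Import GRing.Theory.
Local Open Scope ring_scope.

Section Ideals.
Variable R : comRingType.
Implicit Types (G H : R -> Prop).

Lemma ig0 G : ideal_gen G 0.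
Proof. exists [::]; split => //; by rewrite big_nil. Qed.

Lemma igD G x y : ideal_gen G x -> ideal_gen G y -> ideal_gen G (x + y).
Proof.
move=> [s [Hs ->]] [t [Ht ->]]; exists (s ++ t); split; last by rewrite big_cat.
by move=> pr; rewrite mem_cat => /orP [/Hs|/Ht].
Qed.

Lemma igM G c x : ideal_gen G x -> ideal_gen G (c * x).
Proof.
move=> [s [Hs ->]]; exists [seq (c * pr.1, pr.2) | pr <- s]; split.
  by move=> pr /mapP [q qs ->] /=; apply: Hs.
rewrite big_map mulr_sumr; apply: eq_bigr => pr _ /=; by rewrite mulrA.
Qed.

Lemma igN G x : ideal_gen G x -> ideal_gen G (- x).
Proof. move=> h; rewrite -mulN1r; exact: igM. Qed.

Lemma igG G g : G g -> ideal_gen G g.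
Proof.
move=> h; exists [:: (1, g)]; split; first by move=> pr; rewrite inE => /eqP -> .
by rewrite big_cons big_nil mul1r addr0.
Qed.

Lemma igL G H c f : (forall g, G g -> ideal_gen H (c * g)) ->
  ideal_gen G f -> ideal_gen H (c * f).
Proof.
move=> hg [s [Hs ->]]; rewrite mulr_sumr.
elim: s Hs => [|pr s IH] Hs; first by rewrite big_nil; apply: ig0.
rewrite big_cons; apply: igD; last by apply: IH => q qs; apply: Hs; rewrite inE qs orbT.
rewrite mulrCA; apply: igM; apply: hg; apply: Hs; by rewrite inE eqxx.
Qed.
End Ideals.

Definition sp (i j : nat) := (i.+2 <= j)%N.

Section Key.
Variable R : comRingType.
Variable f : nat -> R.
Definition MM (s : seq nat) := \prod_(i <- s) f i.

Lemma key (lo hi : nat) : forall (T : seq nat) (p : nat) (P : seq nat),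
  sorted sp (p :: P) -> sorted sp T -> size P = size T -> (lo <= p)%N ->
  all (fun i => lo.+1 <= i <= hi)%N P -> all (fun i => lo.+1 <= i <= hi - 1)%N T ->
  (p + 2 * size T < last p P)%N ->
  exists L c, [/\ sorted sp L, size L = (size T).+1, MM (p :: P ++ T) = MM L * c &
     (head 0%N L = p /\ all (fun i => lo <= i <= hi - 1)%N L) \/
     (head 0%N L = head 0%N T /\ all (fun i => lo.+1 <= i <= hi)%N L)].
Proof.
elim=> [|t T' IH] p P.
  by case: P => //= _ _ _ _ _ _; rewrite addn0 ltnn.
case: P => [//|p2 P'] /= /andP [spp sP].
move=> sT' [hs] hlo; have sT := path_sorted sT'.
move=> /andP [] /andP [hp2l hp2h] aP.
move=> /andP [] /andP [htl hth] aT hl.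
case: (leqP (p.+2) t) => h1.
  exists [:: p, t & T'], (MM (p2 :: P')); split => //=.
  - by apply/andP; split.
  - by rewrite /MM !big_cons big_cat /= !big_cons; ring.
  - left; split => //=; rewrite hlo /=.
    have -> : (p <= hi - 1)%N by lia.
    have -> : (lo <= t <= hi - 1)%N by lia.
    apply: sub_all aT => i /andP [a b]; apply/andP; split => //; lia.
case: (leqP (t.+2) p2) => h2.
  exists [:: t, p2 & P'], (f p * MM T'); split => //=.
  - by apply/andP; split.
  - by rewrite hs.
  - by rewrite /MM !big_cons big_cat /= !big_cons; ring.
  - right; split => //=; rewrite aP andbT; apply/andP; split; lia.
have ep : p = t.-1 by rewrite /sp in spp; lia.
have ep2 : p2 = t.+1 by rewrite /sp in spp; lia.
case: T' IH sT sT' aT hs hl => [|t2 T''] IH sT sT' aT hs hl.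
  case: P' sP aP hs hl => //= _ _ _; lia.
have h3 : (lo <= p2)%N by lia.
have h4 : (p2 + 2 * size (t2 :: T'') < last p2 P')%N by move: hl => /=; lia.
have [L [c [sL szL eM hL]]] := IH p2 P' sP sT hs h3 aP aT h4.
case: L sL szL eM hL => [//|l L] sL szL eM hL.
case: hL => [[/= hl1 aL]|[/= hl1 aL]].
  exists [:: p, l & L], (c * f t); split.
  - apply/andP; split; last exact: sL.
    rewrite /sp hl1; lia.
  - by move: szL => /= ->.
  - have -> : MM (p :: (p2 :: P') ++ t :: t2 :: T'') = f p * f t * MM (p2 :: P' ++ t2 :: T'').
      by rewrite /MM !big_cons !big_cat !big_cons /=; ring.
    rewrite eM /MM !big_cons; ring.
  - left; split => //; rewrite /= in aL; apply/andP; split => //; lia.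
exists [:: t, l & L], (c * f p); split.
- apply/andP; split; last exact: sL.
  rewrite /sp hl1 /=; move: sT' => /= /andP [] //.
- by move: szL => /= ->.
- have -> : MM (p :: (p2 :: P') ++ t :: t2 :: T'') = f p * f t * MM (p2 :: P' ++ t2 :: T'').
    by rewrite /MM !big_cons !big_cat !big_cons /=; ring.
  rewrite eM /MM !big_cons; ring.
- right; split => //; rewrite /= in aL; apply/andP; split => //; lia.
Qed.
End Key.

Theorem lemma3p5 (k : fieldType) (d m : nat) :
  ~~ odd d -> (4 <= d)%N -> (d < m - 1)%N ->
  let a := ((d + 2) %/ 2)%N in
  let x1 := @xv k m 1 in
  let xm := @xv k m m in
  let z := @zv k m in
  let G1 := @Igens k m (a - 1) 2 (m - 1) in
  let G2 := @Igens k m (a - 2) 3 (m - 2) in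
  let I := ideal_gen (genU (@Igens k m a 1 (m - 1)) (@Igens k m a 2 m)) in
  let J := ideal_gen (genU G1 (genM z G2)) in
  (* (a) *)
  (forall v w, ideal_gen G1 v -> ideal_gen G2 w -> I (x1 * xm * v * w))
  /\
  (* (b) *)
  (forall b b1 b2 : {mpoly k[m.+1]},
     J b -> regular_mod I b ->
     ideal_gen (genU G1 I) b1 ->
     ideal_gen (genU G2 I) b2 ->
     I (b - (b1 + z * b2)) ->
     forall w, ideal_gen G2 w ->
       (* s0 * z * w = w * x1 * xm in K(R/I), where s0 = b2 x1 xm / b *)
       frac_eq I (b2 * x1 * xm * z * w) b (w * x1 * xm) 1).
Proof.
move=> hev h4 hdm a x1 xm z G1 G2 I J.
have hd2 : (d %% 2 = 0)%N by rewrite modn2 (negbTE hev).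
have ha : (2 * a = d + 2)%N by rewrite /a; lia.
have gen : forall g h, G1 g -> G2 h -> I (x1 * xm * g * h).
  move=> g h [T [szT sT aT ->]] [S [szS sS aS ->]].
  case: S szS sS aS => [|s S'] szS sS aS; first by move: szS => /=; lia.
  move: szS => /= szS.
  have sP : sorted sp (1 :: (s :: S') ++ [:: m]).
    rewrite /= cat_path; apply/and3P; split => //.
      by move: aS => /= /andP [] /andP [hs _] _; rewrite /sp.
    rewrite /= andbT /sp.
    have : last s S' \in s :: S' by apply: mem_last.
    move/(allP aS) => /andP [_ hl]; lia.
  have hsz : size ((s :: S') ++ [:: m]) = size T by rewrite size_cat /= addn1; lia.
  have h1 : (1 <= 1)%N by [].
  have hP : all (fun i => 1.+1 <= i <= m)%N ((s :: S') ++ [:: m]).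
    rewrite all_cat /= andbT; apply/andP; split; last lia.
    apply/andP; split.
      by move: aS => /= /andP [] /andP [hs hs'] _; lia.
    move: aS => /= /andP [] _; apply: sub_all => i /andP [u v]; lia.
  have hl : (1 + 2 * size T < last 1 ((s :: S') ++ [:: m]))%N.
    rewrite last_cat /=; lia.
  have [L [c [sL szL eM hL]]] := @key _ (@xv k m) 1 m T 1 _ sP sT hsz h1 hP aT hl.
  have -> : x1 * xm * \prod_(i <- T) xv k m i * \prod_(i <- s :: S') xv k m i
     = @MM _ (@xv k m) (1 :: ((s :: S') ++ [:: m]) ++ T).
    by rewrite /MM !big_cons !big_cat !big_cons !big_nil /x1 /xm /=; ring.
  rewrite eM mulrC; apply: igM; apply: igG.
  case: hL => [[_ aL]|[_ aL]]; [left|right]; exists L; split => //; lia.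
have partA : forall v w, ideal_gen G1 v -> ideal_gen G2 w -> I (x1 * xm * v * w).
  move=> v w hv hw.
  have -> : x1 * xm * v * w = (x1 * xm * w) * v by ring.
  apply: igL hv => g hg.
  have -> : x1 * xm * w * g = (x1 * xm * g) * w by ring.
  apply: igL hw => h hh; exact: gen.
split => //.
move=> b b1 b2 _ _ hb1 _ hI w hw.
exists 1; split; first by move=> y; rewrite mul1r.
have -> : 1 * (b2 * x1 * xm * z * w * 1 - w * x1 * xm * b)
   = (- (x1 * xm * w)) * (b - (b1 + z * b2)) + - ((x1 * xm * w) * b1) by ring.
apply: igD; first by apply: igM.
apply: igN; apply: igL hb1 => g [hg|hg]; last by apply: igM.
have -> : x1 * xm * w * g = x1 * xm * g * w by ring.
apply: partA => //; exact: igG.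
Qed.
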